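(* Let $\langle M,\mathsf{S}\rangle$ be a sum structure. Then for all $x\in M$ and $X\subseteq M$: $x\,\mathsf{S}\,X$ if and only if $x\,\mathsf{S}_{\sqsubseteq_{\mathsf{S}}}\,X$.
   Context: For a set $M$ and a relation $\mathsf{S}\subseteq M\times\mathcal{P}(M)$ define: $x\sqsubseteq_{\mathsf{S}} y$ iff there is $X\subseteq M$ with $y\,\mathsf{S}\,X$ and $x\in X$; $\mathrm{I}(x)=\{y\in M\mid y\sqsubseteq_{\mathsf{S}} x\}$ and for $A\subseteq M$, $\mathrm{I}(A)=\bigcup_{a\in A}\mathrm{I}(a)$; $x$ s-overlaps $y$ iff there are $X,Y\subseteq M$ with $x\,\mathsf{S}\,X$, $y\,\mathsf{S}\,Y$, $X\cap Y\neq\emptyset$; a set $A\subseteq M$ is pre-dense in $B\subseteq M$ iff for every $b\in B$ there is $a\in A$ such that $a$ s-overlaps $b$. Overlap w.r.t. $\sqsubseteq_{\mathsf{S}}$: $x\circ y$ iff there is $z\in M$ with $z\sqsubseteq_{\mathsf{S}} x$ and $z\sqsubseteq_{\mathsf{S}} y$. The induced sum: $x\,\mathsf{S}_{\sqsubseteq_{\mathsf{S}}}\,X$ iff every $y\in X$ satisfies $y\sqsubseteq_{\mathsf{S}} x$, and for every $z\in M$ with $z\sqsubseteq_{\mathsf{S}} x$ there is $y\in X$ with $y\circ z$. A sum structure is a pair $\langle M,\mathsf{S}\rangle$ satisfying: (S1) for every non-empty $X\subseteq M$ there is $x\in M$ with $x\,\mathsf{S}\,X$; (S2) $x\,\mathsf{S}\,X\wedge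 y\,\mathsf{S}\,X\to x=y$; (S3) $x\,\mathsf{S}\,X\wedge y\,\mathsf{S}\,Y\wedge x\in Y\to y\,\mathsf{S}\,(X\cup Y)$; (S4) if $x\,\mathsf{S}\,X$, $x\,\mathsf{S}\,Y$ and $y\in Y$, then there are $z\in X$ and $Z,U\subseteq M$ with $z\,\mathsf{S}\,Z$, $y\,\mathsf{S}\,U$ and $Z\cap U\neq\emptyset$; (S5) for all $x\in M$ and $X\subseteq M$: if $X$ is pre-dense in $\mathrm{I}(x)$ then $x\,\mathsf{S}\,(\mathrm{I}(x)\cap\mathrm{I}(X))$. *)

(* Defs.v *)
Section SumDefs.
Context {M : Type} (S : M -> (M -> Prop) -> Prop).

Definition spart (x y : M) : Prop := exists X : M -> Prop, S y X /\ X x.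

Definition Iof (x : M) : M -> Prop := fun y => spart y x.
Definition IofSet (A : M -> Prop) : M -> Prop := fun y => exists a, A a /\ Iof a y.

Definition soverlaps (x y : M) : Prop :=
  exists X Y : M -> Prop, S x X /\ S y Y /\ exists z, X z /\ Y z.

Definition predense (A B : M -> Prop) : Prop :=
  forall b, B b -> exists a, A a /\ soverlaps a b.

Definition ovl (x y : M) : Prop := exists z, spart z x /\ spart z y.

Definition induced_sum (x : M) (X : M -> Prop) : Prop :=
  (forall y, X y -> spart y x) /\
  (forall z, spart z x -> exists y, X y /\ ovl y z).

Definition sum_structure : Prop :=
  (forall X : M -> Prop, (exists y, X y) -> exists x, S x X) /\
  (forall x y X, S x X -> S y X -> x = y) /\
  (forall x y X Y, S x X -> S y Y -> Y x -> S y (fun z => X z \/ Y z)) /\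
  (forall x X Y y, S x X -> S x Y -> Y y ->
              exists z Z U, X z /\ S z Z /\ S y U /\ exists w, Z w /\ U w) /\
  (forall x X, predense X (Iof x) ->
              S x (fun z => Iof x z /\ IofSet X z)).
End SumDefs.

(* Main.v *)
Require Import Defs.
From Stdlib Require Import FunctionalExtensionality PropExtensionality.

Section Aux.
Context {M : Type} (S : M -> (M -> Prop) -> Prop).

Lemma fwd (H : sum_structure S) x X : S x X -> induced_sum S x X.
Proof.
  destruct H as [S1 [S2 [S3 [S4 S5]]]]. intros HX. split.
  - intros y Hy. exists X. auto.
  - intros z [Z [HZ Hz]].
    destruct (S4 x X Z z HX HZ Hz) as [y [Y [U [Hy [HY [HU [w [Hw1 Hw2]]]]]]]].
    exists y. split; auto. exists w. split; [exists Y|exists U]; auto.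
Qed.

Lemma trans (H : sum_structure S) w a x : spart S w a -> spart S a x -> spart S w x.
Proof.
  destruct H as [S1 [S2 [S3 [S4 S5]]]].
  intros [W [HW Hw]] [A [HA Ha]].
  exists (fun z => W z \/ A z). split; auto. eapply S3; eauto.
Qed.

Lemma key (H : sum_structure S) x X : induced_sum S x X ->
  S x (IofSet S X).
Proof.
  intros [H1 H2].
  pose proof H as H'.
  destruct H' as [S1 [S2 [S3 [S4 S5]]]].
  assert (Hp : predense S X (Iof S x)).
  { intros b Hb. destruct (H2 b Hb) as [y [Hy [w [[Y [HY HwY]] [B [HB HwB]]]]]].
    exists y. split; auto. exists Y, B. repeat split; auto. exists w; auto. }
  specialize (S5 x X Hp).
  replace (IofSet S X) with (fun z => Iof S x z /\ IofSet S X z); auto.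
  apply functional_extensionality; intro z; apply propositional_extensionality.
  split; [tauto|]. intros Hz; split; auto.
  destruct Hz as [a [Ha Hza]]. unfold Iof in *. eapply trans; eauto.
Qed.
End Aux.

Theorem theorem3p12 (M : Type) (S : M -> (M -> Prop) -> Prop) :
  sum_structure S ->
  forall (x : M) (X : M -> Prop), S x X <-> induced_sum S x X.
Proof.
  intros H x X. split; [apply fwd; auto|].
  intros Hi.
  pose proof H as H'.
  destruct H' as [S1 [S2 [S3 [S4 S5]]]].
  assert (Hne : exists y, X y).
  { destruct (S1 (fun z => z = x) (ex_intro _ x eq_refl)) as [t Ht].
    destruct (S4 t _ _ x Ht Ht eq_refl) as [z [Z [U [Hz [HZ [HU [w [Hw1 Hw2]]]]]]]].
    subst z. destruct Hi as [_ H2].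
    destruct (H2 w (ex_intro _ Z (conj HZ Hw1))) as [y [Hy _]]. eauto. }
  destruct (S1 X Hne) as [s Hs].
  pose proof (key S H x X Hi) as Kx.
  pose proof (key S H s X (fwd S H s X Hs)) as Ks.
  rewrite (S2 x s _ Kx Ks). exact Hs.
Qed.
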